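(* There is an adjunction $M \dashv \mathrm{Idem}$ between the category $\mathrm{DLatt}_{lb}$ of lower bounded distributive lattices and the category $\mathrm{CAlg}^{nu}$ of non-unital commutative rings, where the left adjoint sends $D$ to its module of motives $M(D)$ with multiplication $[U]\cdot[V]=[U\wedge V]$, and the right adjoint sends a non-unital commutative ring $R$ to its set of idempotents $\mathrm{Idem}(R)=\{p\in R \mid p^2=p\}$ viewed as a lower bounded distributive lattice with bottom $0$, $p\wedge q = pq$ and $p\vee q = p+q-pq$.
   Context: A lower bounded distributive lattice is a distributive lattice with a bottom element $0$; morphisms in $\mathrm{DLatt}_{lb}$ are lattice homomorphisms preserving $0$. The module of motives $M(D)$ is the free abelian group $\mathbb{Z}[D]$ modulo the relations $[0]=0$ and $[U]+[V]=[U\vee V]+[U\wedge V]$ for all $U,V\in D$. *)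

(* Defs.v *)
From HB Require Import structures.
From mathcomp Require Import all_boot all_order all_algebra.
From mathcomp Require Import ring_quotient.
From mathcomp Require Import freeg.
From Stdlib Require Import ClassicalEpsilon.

Set Implicit Arguments.
Unset Strict Implicit.
Unset Printing Implicit Defensive.

Import Order.TTheory GRing.Theory Num.Theory.
Local Open Scope ring_scope.
Local Open Scope quotient_scope.

Definition is_nuCRing (A : zmodType) (mul : A -> A -> A) : Prop :=
  [/\ associative mul, commutative mul & left_distributive mul +%R].

Definition nu_ring_hom (A B : zmodType) (mulA : A -> A -> A)
  (mulB : B -> B -> B) (g : A -> B) : Prop :=
  (forall x y, g (x + y) = g x + g y) /\ (forall x y, g (mulA x y) = mulB (g x) (g y)).

Section Idem.
Variables (R : zmodType) (mul : R -> R -> R).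
Definition idem (p : R) : Prop := mul p p = p.
Definition idem_meet (p q : R) : R := mul p q.
Definition idem_join (p q : R) : R := p + q - mul p q.
Definition idem_bot : R := 0.

Definition Idem_is_lbdlattice : Prop :=
  idem idem_bot /\
  (forall p q, idem p -> idem q -> idem (idem_meet p q)) /\
  (forall p q, idem p -> idem q -> idem (idem_join p q)) /\
  (forall p q, idem p -> idem q ->
     idem_meet p q = idem_meet q p /\ idem_join p q = idem_join q p) /\
  (forall p q r, idem p -> idem q -> idem r ->
     idem_meet p (idem_meet q r) = idem_meet (idem_meet p q) r /\
     idem_join p (idem_join q r) = idem_join (idem_join p q) r) /\
  (forall p q, idem p -> idem q ->
     idem_meet p (idem_join p q) = p /\ idem_join p (idem_meet p q) = p) /\
  (forall p q r, idem p -> idem q -> idem r ->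
     idem_meet p (idem_join q r) = idem_join (idem_meet p q) (idem_meet p r)) /\
  (forall p, idem p -> idem_join idem_bot p = p).
End Idem.

Definition lb_hom_to_Idem (d : Order.disp_t) (D : bDistrLatticeType d)
  (R : zmodType) (mul : R -> R -> R) (f : D -> R) : Prop :=
  [/\ (forall U, idem mul (f U)),
      (forall U V, f (Order.meet U V) = idem_meet mul (f U) (f V)),
      (forall U V, f (Order.join U V) = idem_join mul (f U) (f V)) &
      f Order.bottom = idem_bot R].

(* The module of motives M(D) = Z[D] / <[0], [U]+[V]-[U v V]-[U ^ V]>. *)
Section Motives.
Variables (d : Order.disp_t) (D : bDistrLatticeType d).

Definition ZD := {freeg D / int}.

Inductive motive_rel : ZD -> Prop :=
| mrel_bot : motive_rel << (Order.bottom : D) >>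
| mrel_mv (U V : D) :
    motive_rel (<< U >> + << V >> - << Order.join U V >> - << Order.meet U V >>)
| mrel_zero : motive_rel 0
| mrel_sub x y : motive_rel x -> motive_rel y -> motive_rel (x - y).

Definition motive_relb (x : ZD) : bool :=
  if excluded_middle_informative (motive_rel x) then true else false.

Lemma motive_relbP x : reflect (motive_rel x) (motive_relb x).
Proof.
rewrite /motive_relb; case: excluded_middle_informative => H.
- by constructor.
- by constructor.
Qed.

Lemma motive_rel_zmod_closed : zmod_closed motive_relb.
Proof.
split; first by apply/motive_relbP; exact: mrel_zero.
by move=> x y /motive_relbP Hx /motive_relbP Hy; apply/motive_relbP; exact: mrel_sub.
Qed.

Definition N_D_pred : {pred ZD} := fun x => motive_relb x.

HB.instance Definition _ := GRing.isZmodClosed.Build ZD N_D_pred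
  motive_rel_zmod_closed.

Definition N_D : zmodClosed ZD := N_D_pred.

Definition M := @Quotient.quot ZD N_D.
HB.instance Definition _ := GRing.Zmodule.on M.
Definition motive (U : D) : M := \pi_M << U >>.
End Motives.

(* Main.v *)
Require Import Defs.
From HB Require Import structures.
From mathcomp Require Import all_boot all_order all_algebra.
From mathcomp Require Import ring_quotient freeg.
From Stdlib Require Import FunctionalExtensionality.
Set Implicit Arguments.
Unset Strict Implicit.
Unset Printing Implicit Defensive.
Import Order.TTheory GRing.Theory.
Local Open Scope ring_scope.
Local Open Scope quotient_scope.

Definition zint (V : zmodType) : Type := V.
HB.instance Definition _ (V : zmodType) := GRing.Zmodule.on (zint V).
Section ZintS.
Variable V : zmodType.
Definition zscale (k : int) (x : zint V) : zint V := x *~ k.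
Fact zscaleA a b (v : zint V) : zscale a (zscale b v) = zscale (a * b) v.
Proof. by rewrite /zscale mulrC mulrzA. Qed.
Fact zscale1 : left_id 1 zscale.
Proof. by move=> x; rewrite /zscale mulr1z. Qed.
Fact zscaleDr : right_distributive zscale +%R.
Proof. by move=> k x y; rewrite /zscale mulrzDl. Qed.
Fact zscaleDl (v : zint V) : {morph zscale^~ v: a b / a + b}.
Proof. by move=> a b; rewrite /zscale mulrzDr. Qed.
HB.instance Definition _ := GRing.Zmodule_isLmodule.Build int (zint V)
  zscaleA zscale1 zscaleDr zscaleDl.
End ZintS.

Section FreegInd.
Variable K : choiceType.
Lemma freeg_ind (P : {freeg K / int} -> Prop) :
  P 0 -> (forall x y, P x -> P y -> P (x - y)) -> (forall U, P << U >>) ->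
  forall x, P x.
Proof.
move=> P0 PB PU x.
have PN : forall x, P x -> P (- x) by move=> y Py; rewrite -sub0r; exact: PB.
have PD : forall x y, P x -> P y -> P (x + y).
  by move=> y z Py Pz; rewrite -[z]opprK; apply: PB => //; exact: PN.
have PZ : forall x (k : int), P x -> P (x *~ k).
  move=> y k Py.
  have PM : forall m, P (y *+ m).
    by elim=> [|m IH]; [rewrite mulr0n | rewrite mulrS; exact: PD].
  case: k => n; first by rewrite -pmulrn.
  by rewrite NegzE mulrNz -pmulrn; apply: PN.
rewrite -(freeg_sumE x); elim: (dom x) => [|z s IH]; [by rewrite big_nil | rewrite big_cons; apply: PD => //].
rewrite -[coeff z x]intz -freegU_mulz; exact: PZ.
Qed.

Lemma fgliftU (M : lmodType int) (f : K -> M) U : fglift f << U >> = f U.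
Proof. by rewrite liftU scale1r. Qed.

Lemma fgliftB (M : lmodType int) (f : K -> M) x y :
  fglift f (x - y) = fglift f x - fglift f y.
Proof. exact: lift_is_additive. Qed.

Lemma fglift0 (M : lmodType int) (f : K -> M) : fglift f 0 = 0.
Proof. by have := fgliftB f 0 0; rewrite subrr => ->; rewrite subrr. Qed.

Lemma fglift_sub (M : lmodType int) (f g : K -> M) x :
  fglift (fun U => f U - g U) x = fglift f x - fglift g x.
Proof.
elim/freeg_ind: x => [|x y IHx IHy|U].
- by rewrite !fglift0 subrr.
- by rewrite !fgliftB IHx IHy !opprD !opprK addrACA.
- by rewrite !fgliftU.
Qed.
End FreegInd.

Lemma gen_ext (K : choiceType) (T : zmodType) (F G : {freeg K / int} -> T) :
  (forall x y, F (x - y) = F x - F y) -> (forall x y, G (x - y) = G x - G y) ->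
  (forall U, F << U >> = G << U >>) -> forall x, F x = G x.
Proof.
move=> HF HG HU; elim/freeg_ind => [|x y hx hy|U] //; last by rewrite HF HG hx hy.
by have := HF 0 0; have := HG 0 0; rewrite !subrr => -> ->.
Qed.

Section Mot.
Variables (d : Order.disp_t) (D : bDistrLatticeType d).
Local Notation ZD := (ZD D).

Definition mulZ (x y : ZD) : ZD :=
  fglift (fun U : D => fglift (fun V : D => << Order.meet U V >> : ZD) y) x.

Lemma mulZU U V : mulZ << U >> << V >> = << Order.meet U V >>.
Proof. by rewrite /mulZ !fgliftU. Qed.

Lemma mulZBl x y z : mulZ (x - y) z = mulZ x z - mulZ y z.
Proof. exact: fgliftB. Qed.

Lemma mulZBr x y z : mulZ x (y - z) = mulZ x y - mulZ x z.
Proof.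
rewrite /mulZ -fglift_sub; congr fglift; apply: functional_extensionality => U.
exact: fgliftB.
Qed.

Lemma mulZ0l x : mulZ 0 x = 0.
Proof. by have := mulZBl 0 0 x; rewrite subrr => ->; rewrite subrr. Qed.
Lemma mulZ0r x : mulZ x 0 = 0.
Proof. by have := mulZBr x 0 0; rewrite subrr => ->; rewrite subrr. Qed.
Lemma mulZNl x z : mulZ (- x) z = - mulZ x z.
Proof. by rewrite -sub0r mulZBl mulZ0l sub0r. Qed.
Lemma mulZDl x y z : mulZ (x + y) z = mulZ x z + mulZ y z.
Proof. by rewrite -{1}[y]opprK mulZBl mulZNl opprK. Qed.

Lemma mulZC x y : mulZ x y = mulZ y x.
Proof.
move: x; apply: (gen_ext (F := fun x => mulZ x y) (G := fun x => mulZ y x))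
  => [x z|x z|U] /=; rewrite ?mulZBl ?mulZBr //.
move: y; apply: (gen_ext (F := fun y => mulZ << U >> y) (G := fun y => mulZ y << U >>))
  => [x z|x z|V] /=; rewrite ?mulZBl ?mulZBr //.
by rewrite !mulZU meetC.
Qed.

Lemma mulZA x y z : mulZ x (mulZ y z) = mulZ (mulZ x y) z.
Proof.
move: x; apply: (gen_ext (F := fun x => mulZ x (mulZ y z))
   (G := fun x => mulZ (mulZ x y) z)) => [x w|x w|U] /=; rewrite ?mulZBl ?mulZBr //.
move: y; apply: (gen_ext (F := fun y => mulZ << U >> (mulZ y z))
   (G := fun y => mulZ (mulZ << U >> y) z)) => [x w|x w|V] /=; rewrite ?mulZBl ?mulZBr ?mulZBl //.
move: z; apply: (gen_ext (F := fun z => mulZ << U >> (mulZ << V >> z))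
   (G := fun z => mulZ (mulZ << U >> << V >>) z)) => [x w|x w|W] /=; rewrite ?mulZBl ?mulZBr //.
by rewrite !mulZU meetA.
Qed.

Lemma mrel_add (x y : ZD) : motive_rel x -> motive_rel y -> motive_rel (x + y).
Proof.
move=> hx hy; have -> : x + y = x - (0 - y) by rewrite sub0r opprK.
by apply: mrel_sub => //; apply: mrel_sub => //; exact: mrel_zero.
Qed.

Lemma mulZ_rel (x y : ZD) : motive_rel x -> motive_rel (mulZ x y).
Proof.
elim=> [|U V|| x1 x2 _ IH1 _ IH2].
- elim/freeg_ind: y => [|y1 y2 h1 h2|W].
  + by rewrite mulZ0r; exact: mrel_zero.
  + by rewrite mulZBr; exact: mrel_sub.
  + by rewrite mulZU meet0x; exact: mrel_bot.
- elim/freeg_ind: y => [|y1 y2 h1 h2|W].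
  + by rewrite mulZ0r; exact: mrel_zero.
  + by rewrite mulZBr; exact: mrel_sub.
  + rewrite !mulZBl !mulZDl !mulZU meetUl.
    have -> : Order.meet (Order.meet U V) W = Order.meet (Order.meet U W) (Order.meet V W)
      by rewrite meetACA meetxx.
    exact: mrel_mv.
- by rewrite mulZ0l; exact: mrel_zero.
- by rewrite mulZBl; exact: mrel_sub.
Qed.

Local Notation pi := (\pi_(M D)).

Lemma pi_eq (x y : ZD) : pi x = pi y <-> motive_rel (x - y).
Proof.
have := Quotient.idealrBE (N_D D) x y.
split.
  by move=> h; apply/motive_relbP; rewrite -[motive_relb _]/(_ \in N_D D) H; apply/eqP.
by move=> /motive_relbP h; apply/eqP; rewrite -H.
Qed.


Lemma piB (x y : ZD) : pi (x - y) = pi x - pi y.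
Proof. exact: raddfB. Qed.
Lemma piD (x y : ZD) : pi (x + y) = pi x + pi y.
Proof. exact: raddfD. Qed.
Lemma pi0 : pi 0 = 0.
Proof. exact: raddf0. Qed.

Lemma M_ind (P : M D -> Prop) : (forall x, P (pi x)) -> forall a, P a.
Proof. by move=> h a; rewrite -(reprK a); exact: h. Qed.

Definition mulMD (a b : M D) : M D := pi (mulZ (repr a) (repr b)).

Lemma mulM_pi x y : mulMD (pi x) (pi y) = pi (mulZ x y).
Proof.
rewrite /mulMD; apply/pi_eq.
set rx := repr (pi x); set ry := repr (pi y).
have hx : motive_rel (rx - x) by apply/pi_eq; rewrite reprK.
have hy : motive_rel (ry - y) by apply/pi_eq; rewrite reprK.
have -> : mulZ rx ry - mulZ x y = mulZ (rx - x) ry + mulZ (ry - y) x.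
  by rewrite !mulZBl (mulZC ry x) (mulZC y x) addrA subrK.
by apply: mrel_add; apply: mulZ_rel.
Qed.

Lemma mulM_nu : is_nuCRing mulMD.
Proof.
split.
- move=> a b c; elim/M_ind: a => x; elim/M_ind: b => y; elim/M_ind: c => z.
  by rewrite !mulM_pi mulZA.
- move=> a b; elim/M_ind: a => x; elim/M_ind: b => y.
  by rewrite !mulM_pi mulZC.
- move=> a b c; elim/M_ind: a => x; elim/M_ind: b => y; elim/M_ind: c => z.
  by rewrite -piD !mulM_pi mulZDl piD.
Qed.

Lemma mulM_motive U V : mulMD (motive U) (motive V) = motive (Order.meet U V).
Proof. by rewrite /motive mulM_pi mulZU. Qed.

Lemma motive_hom : lb_hom_to_Idem mulMD (@motive d D).
Proof.
split.
- by move=> U; rewrite /idem mulM_motive meetxx.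
- by move=> U V; rewrite /idem_meet mulM_motive.
- move=> U V; rewrite /idem_join mulM_motive.
  have h := (pi_eq (<< U >> + << V >> - << Order.join U V >> - << Order.meet U V >>) 0).2.
  move: h; rewrite subr0 => /(_ (mrel_mv U V)).
  rewrite pi0 !piB piD addrAC => /subr0_eq; rewrite /motive => <-.
  by [].
- rewrite /idem_bot /motive -pi0; apply/pi_eq; rewrite subr0; exact: mrel_bot.
Qed.

End Mot.

Section NuRing.
Variables (R : zmodType) (mul : R -> R -> R).
Hypothesis hR : is_nuCRing mul.

Lemma nmulA : associative mul. Proof. by case: hR. Qed.
Lemma nmulC : commutative mul. Proof. by case: hR. Qed.
Lemma nmulDl : left_distributive mul +%R. Proof. by case: hR. Qed.
Lemma nmulDr : right_distributive mul +%R.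
Proof. by move=> a b c; rewrite !(nmulC a) nmulDl. Qed.
Lemma nmul0l a : mul 0 a = 0.
Proof.
have h := nmulDl 0 0 a; rewrite addr0 in h.
by have := congr1 (fun t => t - mul 0 a) h; rewrite subrr addrK => <-.
Qed.
Lemma nmulNl a b : mul (- a) b = - mul a b.
Proof.
have h := nmulDl a (- a) b; rewrite subrr nmul0l in h.
by rewrite -[RHS]add0r h addrAC subrr add0r.
Qed.
Lemma nmulBl a b c : mul (a - b) c = mul a c - mul b c.
Proof. by rewrite nmulDl nmulNl. Qed.
Lemma nmulBr a b c : mul c (a - b) = mul c a - mul c b.
Proof. by rewrite !(nmulC c) nmulBl. Qed.
Lemma nmulACA a b c e : mul (mul a b) (mul c e) = mul (mul a c) (mul b e).
Proof.
by rewrite -!nmulA; congr (mul a _); rewrite !nmulA (nmulC b c).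
Qed.

Lemma absorb p q : idem mul p -> mul p (p + q - mul p q) = p.
Proof.
move=> hp; rewrite nmulBr nmulDr nmulA hp.
by rewrite addrK.
Qed.

Lemma zmodAC (a b c x y z w : R) :
  a + (b + c - z) - (x + y - w) = (a + b - x) + c - (y + z - w).
Proof.
rewrite !opprD !opprK !addrA; congr (_ + _).
by rewrite (addrAC (a + b) (-x) c) (addrAC (a+b+c) (-z) (-x)) (addrAC (a+b+c-x) (-z) (-y)).
Qed.

Lemma Idem_ok : Idem_is_lbdlattice mul.
Proof.
rewrite /Idem_is_lbdlattice /idem /idem_meet /idem_join /idem_bot.
split; first exact: nmul0l.
split; first by move=> p q hp hq; rewrite nmulACA hp hq.
split.
  move=> p q hp hq.
  have hJp : mul p (p + q - mul p q) = p by exact: absorb.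
  have hJq : mul q (p + q - mul p q) = q.
    by rewrite [p + q]addrC (nmulC p q); exact: absorb.
  have hJpq : mul (mul p q) (p + q - mul p q) = mul p q by rewrite -nmulA hJq.
  by rewrite {1}nmulBl nmulDl hJp hJq hJpq.
split.
  by move=> p q hp hq; split; [exact: nmulC | rewrite [p + q]addrC nmulC].
split.
  move=> p q r hp hq hr; split; first exact: nmulA.
  rewrite !nmulBr !nmulDr !nmulBl !nmulDl -nmulA.
  exact: zmodAC.
split.
  move=> p q hp hq; split; first exact: absorb.
  by rewrite nmulA hp addrK.
split.
  move=> p q r hp hq hr.
  by rewrite nmulBr !nmulDr nmulACA hp.
by move=> p hp; rewrite nmul0l subr0 add0r.
Qed.
End NuRing.

Section Univ.
Variables (d : Order.disp_t) (D : bDistrLatticeType d).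
Variables (R : zmodType) (mulR : R -> R -> R).
Hypothesis hR : is_nuCRing mulR.
Variable f : D -> R.
Hypothesis hf : lb_hom_to_Idem mulR f.
Local Notation pi := (\pi_(M D)).

Definition gZ (x : ZD D) : R := @fglift _ (zint R) D f x.

Lemma gZU U : gZ << U >> = f U.
Proof. exact: (@fgliftU D (zint R)). Qed.
Lemma gZB x y : gZ (x - y) = gZ x - gZ y.
Proof. exact: (@fgliftB D (zint R)). Qed.
Lemma gZ0 : gZ 0 = 0.
Proof. exact: (@fglift0 D (zint R)). Qed.
Lemma gZD x y : gZ (x + y) = gZ x + gZ y.
Proof.
have -> : x + y = x - (0 - y) by rewrite sub0r opprK.
by rewrite !gZB gZ0 sub0r opprK.
Qed.

Lemma gZ_rel x : motive_rel x -> gZ x = 0.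
Proof.
case: hf => _ hmeet hjoin hbot.
elim=> [|U V||x1 x2 _ h1 _ h2].
- by rewrite gZU hbot.
- rewrite !gZB gZD !gZU hjoin hmeet /idem_join /idem_meet.
  set a := f U + f V; set m := mulR (f U) (f V).
  by rewrite opprB [a + _]addrC subrK subrr.
- exact: gZ0.
- by rewrite gZB h1 h2 subrr.
Qed.

Definition gM (b : M D) : R := gZ (repr b).

Lemma gM_pi x : gM (pi x) = gZ x.
Proof.
rewrite /gM; apply/eqP; rewrite -subr_eq0 -gZB; apply/eqP; apply: gZ_rel.
by apply/pi_eq; rewrite reprK.
Qed.

Lemma gZ_mul x y : gZ (mulZ x y) = mulR (gZ x) (gZ y).
Proof.
case: hf => _ hmeet _ _.
move: x; apply: (gen_ext (F := fun x => gZ (mulZ x y)) (G := fun x => mulR (gZ x) (gZ y)))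
  => [x z|x z|U] /=; rewrite ?mulZBl ?gZB ?(nmulBl hR) //.
move: y; apply: (gen_ext (F := fun y => gZ (mulZ << U >> y)) (G := fun y => mulR (gZ << U >>) (gZ y)))
  => [x z|x z|V] /=; rewrite ?mulZBr ?gZB ?(nmulBr hR) //.
by rewrite mulZU !gZU hmeet.
Qed.

Lemma univ : exists! g : M D -> R,
  nu_ring_hom (@mulMD d D) mulR g /\ (forall U : D, g (motive U) = f U).
Proof.
exists gM; split.
  split; first split.
  - move=> a b; elim/M_ind: a => x; elim/M_ind: b => y.
    by rewrite -piD !gM_pi gZD.
  - move=> a b; elim/M_ind: a => x; elim/M_ind: b => y.
    by rewrite mulM_pi !gM_pi gZ_mul.
  - by move=> U; rewrite /motive gM_pi gZU.
move=> g [[addg mulg] hU]; apply: functional_extensionality => b.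
elim/M_ind: b => x; rewrite gM_pi.
have subg : forall a b, g (a - b) = g a - g b.
  by move=> a b; have := addg (a - b) b; rewrite subrK => ->; rewrite addrK.
move: x; apply: (gen_ext (F := gZ) (G := fun x => g (pi x))) => [x y|x y|U] /=.
- exact: gZB.
- by rewrite piB subg.
- by rewrite gZU -hU.
Qed.
End Univ.

Theorem theorem3p38 :
  (forall (R : zmodType) (mulR : R -> R -> R),
      is_nuCRing mulR -> Idem_is_lbdlattice mulR) /\
  (forall (d : Order.disp_t) (D : bDistrLatticeType d),
    exists mulM : M D -> M D -> M D,
      [/\ is_nuCRing mulM,
          (forall U V : D, mulM (motive U) (motive V) = motive (Order.meet U V)),
          lb_hom_to_Idem mulM (@motive d D) &
          forall (R : zmodType) (mulR : R -> R -> R), is_nuCRing mulR ->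
            forall f : D -> R, lb_hom_to_Idem mulR f ->
              exists! g : M D -> R,
                nu_ring_hom mulM mulR g /\ (forall U : D, g (motive U) = f U)]).
Proof.
split; first by move=> R mulR hR; exact: Idem_ok.
move=> d D; exists (@mulMD d D); split.
- exact: mulM_nu.
- exact: mulM_motive.
- exact: motive_hom.
- move=> R mulR hR f hf; exact: univ.
Qed.
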